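(* Let $G$ be a large scale group of bounded geometry that is not locally bounded and is $\sigma$-bounded. If $G$ has exactly two ends, then $G$ contains an infinite cyclic subgroup of bounded index.
   Context: A large scale group is a group $G$ with a bornology $\mathcal B$ (a cover closed under subsets and finite unions) closed under inverses and products; uniformly bounded covers are those refining $\{gB\}_{g\in G}$ for some $B\in\mathcal B$; bounded sets are members of $\mathcal B$. $G$ has bounded geometry if it is coarsely equivalent to a large scale space $Y$ in which every uniformly bounded cover $\mathcal U$ has a bound $N(\mathcal U)$ on the cardinality of its elements (equivalently, there is a bounded $K\subseteq G$ such that every bounded set is covered by finitely many translates $gK$). $G$ is locally bounded if $\langle B\rangle$ is bounded for every bounded $B$. $G$ is $\sigma$-bounded if it is the union of countably many bounded subsets. A subgroup $H$ has bounded index if $B\cdot H=G$ for some bounded $B$. For $A\subseteq G$ and a cover $\mathcal U$, $st(A,\mathcal U)$ is the union of members of $\mathcal U$ meeting $A$; $A$ is coarsely clopen if $st(A,\mathcal U)\cap st(G\setminus A,\mathcal U)$ is bounded for each uniformly bounded $\mathcal U$. An end is a family of unbounded coarsely clopen sets maximal with respect to all finite intersections being unbounded. *)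

(* Defs.v *)
From Stdlib Require Import List.

Record Group := {
  carrier :> Type;
  gmul : carrier -> carrier -> carrier;
  ginv : carrier -> carrier;
  gone : carrier;
  gmulA : forall x y z, gmul x (gmul y z) = gmul (gmul x y) z;
  gmul1l : forall x, gmul gone x = x;
  gmul1r : forall x, gmul x gone = x;
  gmulVl : forall x, gmul (ginv x) x = gone;
  gmulVr : forall x, gmul x (ginv x) = gone
}.

Arguments gmul {_}. Arguments ginv {_}. Arguments gone {_}.

Section LS.
Variable G : Group.
Variable bdd : (G -> Prop) -> Prop.

Definition is_large_scale_group : Prop :=
  (forall x : G, exists A, bdd A /\ A x) /\
  (forall A A' : G -> Prop, bdd A -> (forall x, A' x -> A x) -> bdd A') /\
  (forall A A' : G -> Prop, bdd A -> bdd A' -> bdd (fun x => A x \/ A' x)) /\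
  (forall A : G -> Prop, bdd A -> bdd (fun x => A (ginv x))) /\
  (forall A A' : G -> Prop, bdd A -> bdd A' ->
     bdd (fun x => exists a b, A a /\ A' b /\ x = gmul a b)).

Definition ltrans (g : G) (B : G -> Prop) : G -> Prop :=
  fun x => exists b, B b /\ x = gmul g b.

Definition unif_bdd_cover (U : (G -> Prop) -> Prop) : Prop :=
  (forall x : G, exists V, U V /\ V x) /\
  exists B, bdd B /\
    forall V, U V -> exists g, forall x, V x -> ltrans g B x.

Definition star (A : G -> Prop) (U : (G -> Prop) -> Prop) : G -> Prop :=
  fun x => exists V, U V /\ (exists a, V a /\ A a) /\ V x.

Definition coarsely_clopen (A : G -> Prop) : Prop :=
  forall U, unif_bdd_cover U ->
    bdd (fun x => star A U x /\ star (fun y => ~ A y) U x).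

Definition bigI (l : list (G -> Prop)) : G -> Prop :=
  fun x => Forall (fun A => A x) l.

Definition pre_end (E : (G -> Prop) -> Prop) : Prop :=
  (forall A, E A -> ~ bdd A /\ coarsely_clopen A) /\
  (forall l, l <> nil -> Forall E l -> ~ bdd (bigI l)).

Definition is_end (E : (G -> Prop) -> Prop) : Prop :=
  pre_end E /\
  forall E', pre_end E' -> (forall A, E A -> E' A) -> forall A, E' A -> E A.

Definition same_family (E E' : (G -> Prop) -> Prop) : Prop :=
  forall A, E A <-> E' A.

Definition has_exactly_two_ends : Prop :=
  exists E1 E2, is_end E1 /\ is_end E2 /\ ~ same_family E1 E2 /\
    forall E, is_end E -> same_family E E1 \/ same_family E E2.

Definition subgroup (H : G -> Prop) : Prop :=
  H gone /\ (forall x y, H x -> H y -> H (gmul x y)) /\ (forall x, H x -> H (ginv x)).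

Definition gen (B : G -> Prop) : G -> Prop :=
  fun x => forall H, subgroup H -> (forall b, B b -> H b) -> H x.

Definition locally_bounded : Prop :=
  forall B, bdd B -> bdd (gen B).

Definition sigma_bounded : Prop :=
  exists Bn : nat -> G -> Prop, (forall n, bdd (Bn n)) /\ forall x, exists n, Bn n x.

(* bounded geometry, in the equivalent form given in the paper's context *)
Definition bounded_geometry : Prop :=
  exists K, bdd K /\ forall B, bdd B ->
    exists l : list G, forall x, B x -> exists g, In g l /\ ltrans g K x.

Definition bounded_index (H : G -> Prop) : Prop :=
  exists B, bdd B /\ forall x : G, exists b h, B b /\ H h /\ x = gmul b h.

Fixpoint gpow (a : G) (n : nat) : G :=
  match n with O => gone | S m => gmul a (gpow a m) end.

Definition infinite_cyclic (H : G -> Prop) : Prop :=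
  exists a : G, (forall n, n <> O -> gpow a n <> gone) /\
    forall x, H x <-> exists n, x = gpow a n \/ x = ginv (gpow a n).

End LS.

(* Main.v *)
Require Import Defs.
From Stdlib Require Import List Classical Arith Lia IndefiniteDescription.
From mathcomp Require classical_sets.
Import ListNotations.

Section Main.
Variable G : Group.
Variable bdd : (G -> Prop) -> Prop.
Hypothesis HLS : is_large_scale_group G bdd.

Local Infix "·" := gmul (at level 40, left associativity).

Lemma mulA (x y z : G) : x · (y · z) = x · y · z. Proof. apply gmulA. Qed.
Lemma mul1l (x : G) : gone · x = x. Proof. apply gmul1l. Qed.
Lemma mul1r (x : G) : x · gone = x. Proof. apply gmul1r. Qed.
Lemma mulVl (x : G) : ginv x · x = gone. Proof. apply gmulVl. Qed.
Lemma mulVr (x : G) : x · ginv x = gone. Proof. apply gmulVr. Qed.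

Lemma mulKl (x y : G) : ginv x · (x · y) = y.
Proof. rewrite mulA, mulVl, mul1l; reflexivity. Qed.
Lemma mulKr (x y : G) : x · (ginv x · y) = y.
Proof. rewrite mulA, mulVr, mul1l; reflexivity. Qed.
Lemma mulKl' (x y : G) : x · y · ginv y = x.
Proof. rewrite <- mulA, mulVr, mul1r; reflexivity. Qed.
Lemma mulKr' (x y : G) : x · ginv y · y = x.
Proof. rewrite <- mulA, mulVl, mul1r; reflexivity. Qed.

Lemma inv_uniq (x y : G) : x · y = gone -> y = ginv x.
Proof. intro H. rewrite <- (mulKl x y), H, mul1r. reflexivity. Qed.
Lemma inv_inv (x : G) : ginv (ginv x) = x.
Proof. symmetry. apply inv_uniq. apply mulVl. Qed.
Lemma inv_mul (x y : G) : ginv (x · y) = ginv y · ginv x.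
Proof. symmetry. apply inv_uniq. rewrite <- mulA, (mulA y), mulVr, mul1l, mulVr. reflexivity. Qed.
Lemma inv_one : ginv (gone : G) = gone.
Proof. symmetry. apply inv_uniq. apply mul1l. Qed.

Lemma bdd_cov (x : G) : exists A, bdd A /\ A x. Proof. apply HLS. Qed.
Lemma bdd_sub (A B : G -> Prop) : bdd A -> (forall x, B x -> A x) -> bdd B.
Proof. intros; eapply (proj1 (proj2 HLS)); eauto. Qed.
Lemma bdd_union (A B : G -> Prop) : bdd A -> bdd B -> bdd (fun x => A x \/ B x).
Proof. apply HLS. Qed.
Lemma bdd_inv (A : G -> Prop) : bdd A -> bdd (fun x => A (ginv x)).
Proof. apply HLS. Qed.
Lemma bdd_prod (A B : G -> Prop) : bdd A -> bdd B ->
  bdd (fun x => exists a b, A a /\ B b /\ x = a · b).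
Proof. apply HLS. Qed.
Lemma bdd_single (g : G) : bdd (fun x => x = g).
Proof. destruct (bdd_cov g) as [A [HA Ag]]. apply (bdd_sub A); auto. intros x ->; auto. Qed.
Lemma bdd_empty : bdd (fun _ : G => False).
Proof. apply (bdd_sub _ _ (bdd_single gone)). tauto. Qed.
Lemma bdd_union' (A B C : G -> Prop) : bdd A -> bdd B ->
  (forall x, C x -> A x \/ B x) -> bdd C.
Proof. intros HA HB H. eapply bdd_sub. apply (bdd_union A B HA HB). auto. Qed.

Definition tr (g : G) (P : G -> Prop) : G -> Prop := fun x => P (ginv g · x).

Lemma bdd_tr g P : bdd P -> bdd (tr g P).
Proof.
  intro HP. eapply bdd_sub. apply (bdd_prod _ _ (bdd_single g) HP).
  intros x Hx. exists g, (ginv g · x). repeat split; auto. rewrite mulKr; auto.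
Qed.
Lemma bdd_tr_inv g P : bdd (tr g P) -> bdd P.
Proof.
  intro HP. eapply bdd_sub. apply (bdd_tr (ginv g) _ HP).
  intros x Hx. unfold tr. rewrite inv_inv, mulKl. auto.
Qed.
Lemma bdd_ltrans g P : bdd P -> bdd (ltrans G g P).
Proof.
  intro HP. eapply bdd_sub. apply (bdd_tr g _ HP).
  intros x [b [Hb ->]]. unfold tr. rewrite mulKl; auto.
Qed.

Lemma bdd_list_union (l : list G) (F : G -> G -> Prop) :
  (forall g, In g l -> bdd (F g)) -> bdd (fun x => exists g, In g l /\ F g x).
Proof.
  induction l as [|a l IH]; intros H.
  - eapply bdd_sub. apply bdd_empty. intros x [g [[] _]].
  - eapply bdd_union'. apply (H a (or_introl eq_refl)). apply IH. intros; apply H; simpl; auto.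
    intros x [g [[<-|Hg] Hx]]; [left|right]; eauto.
Qed.

Fixpoint Ball (D : G -> Prop) (n : nat) : G -> Prop :=
  match n with
  | O => fun x => x = gone
  | S n => fun x => exists a d, Ball D n a /\ D d /\ x = a · d
  end.

Lemma Ball_S D n x : D gone -> Ball D n x -> Ball D (S n) x.
Proof. intros H1 H. exists x, gone. rewrite mul1r. auto. Qed.
Lemma Ball_le D n m x : D gone -> n <= m -> Ball D n x -> Ball D m x.
Proof. intros H1 Hle. induction Hle; auto. intro; apply Ball_S; auto. Qed.
Lemma Ball_mul D m n a b : Ball D m a -> Ball D n b -> Ball D (m + n) (a · b).
Proof.
  revert b. induction n as [|n IH]; intros b Ha Hb; simpl in Hb.
  - subst. rewrite mul1r, Nat.add_0_r. auto.
  - destruct Hb as [b' [d [Hb' [Hd ->]]]]. rewrite Nat.add_succ_r.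
    exists (a · b'), d. rewrite mulA. auto.
Qed.
Lemma Ball_one D d : D d -> Ball D 1 d.
Proof. intro. exists gone, d. rewrite mul1l. simpl; auto. Qed.
Lemma Ball_inv D n w : (forall d, D d -> D (ginv d)) -> Ball D n w -> Ball D n (ginv w).
Proof.
  intro Hs. revert w. induction n as [|n IH]; intros w Hw; simpl in Hw.
  - subst. rewrite inv_one. reflexivity.
  - destruct Hw as [a [d [Ha [Hd ->]]]]. rewrite inv_mul.
    apply (Ball_mul D 1 n). apply Ball_one; auto. auto.
Qed.
Lemma Ball_bdd D n : bdd D -> bdd (Ball D n).
Proof.
  intro HD. induction n as [|n IH]; simpl.
  - apply bdd_single.
  - apply bdd_prod; auto.
Qed.


Lemma star_mono (A A' : G -> Prop) U x : (forall y, A y -> A' y) -> star G A U x -> star G A' U x.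
Proof. intros H [V [HV [[a [Va Aa]] Vx]]]. exists V. eauto 6. Qed.

Definition cov (D : G -> Prop) : (G -> Prop) -> Prop := fun V => exists g, V = ltrans G g D.

Lemma cov_ubc D : bdd D -> D gone -> unif_bdd_cover G bdd (cov D).
Proof.
  intros HD H1. split.
  - intro x. exists (ltrans G x D). split. exists x; auto. exists gone. rewrite mul1r; auto.
  - exists D. split; auto. intros V [g ->]. exists g. auto.
Qed.

Lemma ccl_bd (A D : G -> Prop) : coarsely_clopen G bdd A -> bdd D -> D gone ->
  bdd (fun x => A x /\ exists d, D d /\ ~ A (x · d)).
Proof.
  intros HA HD H1. eapply bdd_sub. apply (HA _ (cov_ubc D HD H1)).
  intros x [Ax [d [Dd nA]]]. split.
  - exists (ltrans G x D). split. exists x; auto. split. exists x. split; auto.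
    exists gone. rewrite mul1r; auto. exists gone. rewrite mul1r; auto.
  - exists (ltrans G x D). split. exists x; auto. split. exists (x · d). split; auto.
    exists d; auto. exists gone. rewrite mul1r; auto.
Qed.

Lemma ccl_compl (A : G -> Prop) : coarsely_clopen G bdd A -> coarsely_clopen G bdd (fun x => ~ A x).
Proof.
  intros HA U HU. eapply bdd_sub. apply (HA U HU). intros x [H1 H2]. split.
  - eapply star_mono; [|exact H2]. intros y Hy. apply NNPP; auto.
  - exact H1.
Qed.

Lemma ccl_bd' (A D : G -> Prop) : coarsely_clopen G bdd A -> bdd D -> D gone ->
  bdd (fun x => ~ A x /\ exists d, D d /\ A (x · d)).
Proof.
  intros HA HD H1. eapply bdd_sub. apply (ccl_bd _ _ (ccl_compl A HA) HD H1).
  intros x [Ax [d [Dd nA]]]. split; auto. exists d. split; auto.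
Qed.

Lemma ccl_inter (A B : G -> Prop) : coarsely_clopen G bdd A -> coarsely_clopen G bdd B ->
  coarsely_clopen G bdd (fun x => A x /\ B x).
Proof.
  intros HA HB U HU. eapply bdd_union'. apply (HA U HU). apply (HB U HU).
  intros x [H1 H2].
  destruct H2 as [V [HV [[a [Va Na]] Vx]]].
  destruct (classic (A a)) as [Aa|nAa].
  - right. split. eapply star_mono; [|exact H1]. intros y Hy; apply Hy.
    exists V. split; auto. split; auto. exists a. split; auto.
  - left. split. eapply star_mono; [|exact H1]. intros y Hy; apply Hy.
    exists V. split; auto. split; auto. exists a. split; auto.
Qed.

Lemma ccl_tr (A : G -> Prop) g : coarsely_clopen G bdd A -> coarsely_clopen G bdd (tr g A).
Proof.
  intros HA U HU.
  set (U' := fun V' => exists V, U V /\ V' = (fun y => V (g · y))).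
  assert (HU' : unif_bdd_cover G bdd U').
  { destruct HU as [Hc [B [HB Hr]]]. split.
    - intro x. destruct (Hc (g · x)) as [V [HV Vx]]. exists (fun y => V (g · y)).
      split; auto. exists V; auto.
    - exists B. split; auto. intros V' [V [HV ->]]. destruct (Hr V HV) as [h Hh].
      exists (ginv g · h). intros y Vy. destruct (Hh _ Vy) as [b [Bb Eb]].
      exists b. split; auto. rewrite <- mulA, <- Eb, mulKl. auto. }
  eapply bdd_sub. apply (bdd_tr g _ (HA U' HU')).
  intros x [[V [HV [[a [Va Aa]] Vx]]] [V2 [HV2 [[a2 [Va2 Aa2]] Vx2]]]]. unfold tr. split.
  - exists (fun y => V (g · y)). split. exists V; auto. split.
    exists (ginv g · a). rewrite mulKr. auto. rewrite mulKr. auto.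
  - exists (fun y => V2 (g · y)). split. exists V2; auto. split.
    exists (ginv g · a2). rewrite mulKr. auto. rewrite mulKr. auto.
Qed.

Lemma bigI_cons A l x : bigI G (A :: l) x <-> A x /\ bigI G l x.
Proof. unfold bigI. split. intro H. inversion H; auto. intros [? ?]; constructor; auto. Qed.

Lemma chain_list (F : ((G -> Prop) -> Prop) -> Prop) :
  (forall E1 E2, F E1 -> F E2 -> (forall X, E1 X -> E2 X) \/ (forall X, E2 X -> E1 X)) ->
  forall l, l <> nil -> Forall (fun X => exists E, F E /\ E X) l ->
  exists E, F E /\ Forall E l.
Proof.
  intros Htot l. induction l as [|a l IH]; intros Hnil Hl. congruence.
  inversion Hl as [|? ? [Ea [FEa Eaa]] Hl']; subst.
  destruct l as [|b l].
  - exists Ea. split; auto.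
  - destruct (IH ltac:(discriminate) Hl') as [E [FE HE]].
    destruct (Htot Ea E FEa FE) as [H|H].
    + exists E. split; auto.
    + exists Ea. split; auto. constructor; auto. eapply Forall_impl; [|exact HE]. auto.
Qed.

Lemma end_exists (P0 : G -> Prop) : coarsely_clopen G bdd P0 -> ~ bdd P0 ->
  exists E, is_end G bdd E /\ E P0.
Proof.
  intros Hc Hu.
  set (Pf := fun E : (G -> Prop) -> Prop => pre_end G bdd E /\ (E P0 \/ forall X, ~ E X)).
  assert (Hsing : pre_end G bdd (fun X => X = P0)).
  { split. intros A ->; auto. intros l Hl Hf Hb. apply Hu. eapply bdd_sub. exact Hb.
    intros x Px. unfold bigI. eapply Forall_impl; [|exact Hf]. intros a ->; auto. }
  destruct (@classical_sets.Zorn_bigcup ((G -> Prop)) Pf) as [E [PE Emax]].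
  - intros F HF Htot. unfold classical_sets.bigcup. simpl. split.
    + split.
      * intros A [E FE EA]. apply (proj1 (proj1 (HF E FE)) A EA).
      * intros l Hl Hf.
        assert (Ht : forall E1 E2, F E1 -> F E2 -> (forall X, E1 X -> E2 X) \/ (forall X, E2 X -> E1 X)).
        { intros E1 E2 H1 H2. destruct (Htot E1 E2 H1 H2) as [H|H]; [left|right]; intros X HX; apply H; auto. }
        assert (Hf' : Forall (fun X => exists E, F E /\ E X) l).
        { eapply Forall_impl; [|exact Hf]. intros a [E FE Ea]. eauto. }
        destruct (chain_list F Ht l Hl Hf') as [E [FE HE]].
        apply (proj2 (proj1 (HF E FE))); auto.
    + destruct (classic (exists E, F E /\ E P0)) as [[E [FE EP]]|Hn].
      * left. exists E; auto.
      * right. intros X [E FE EX]. destruct (proj2 (HF E FE)) as [H|H].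
        -- apply Hn; eauto.
        -- eapply H; eauto.
  - assert (EP : E P0).
    { destruct (proj2 PE) as [H|H]; auto. exfalso.
      apply (Emax (fun X => X = P0)). split. intros X EX. exfalso; eapply H; eauto.
      intro Hs. apply (H P0). apply Hs. reflexivity. split; auto. }
    exists E. split; auto. split. apply PE.
    intros E' HE' Hsub A E'A. apply NNPP. intro nEA.
    apply (Emax E'). split. exact Hsub. intro Hs. apply nEA. apply Hs; auto.
    split; auto.
Qed.

Lemma ends_distinct E1 E2 X Y : is_end G bdd E1 -> is_end G bdd E2 -> E1 X -> E2 Y ->
  bdd (fun x => X x /\ Y x) -> ~ same_family G E1 E2.
Proof.
  intros H1 H2 HX HY Hb Hs. apply (proj2 (proj1 H1) [X; Y]). discriminate.
  constructor; auto. constructor; auto. apply Hs; auto.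
  eapply bdd_sub. exact Hb. intros x Hx. apply bigI_cons in Hx as [? Hx]. apply bigI_cons in Hx as [? _]. auto.
Qed.

Hypothesis H2E : has_exactly_two_ends G bdd.

Lemma three_ends X Y Z : coarsely_clopen G bdd X -> coarsely_clopen G bdd Y -> coarsely_clopen G bdd Z ->
  ~ bdd X -> ~ bdd Y -> ~ bdd Z ->
  bdd (fun x => X x /\ Y x) -> bdd (fun x => X x /\ Z x) -> bdd (fun x => Y x /\ Z x) -> False.
Proof.
  intros cX cY cZ uX uY uZ XY XZ YZ.
  destruct (end_exists X cX uX) as [EX [eX EXX]].
  destruct (end_exists Y cY uY) as [EY [eY EYY]].
  destruct (end_exists Z cZ uZ) as [EZ [eZ EZZ]].
  pose proof (ends_distinct _ _ _ _ eX eY EXX EYY XY) as dXY.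
  pose proof (ends_distinct _ _ _ _ eX eZ EXX EZZ XZ) as dXZ.
  pose proof (ends_distinct _ _ _ _ eY eZ EYY EZZ YZ) as dYZ.
  destruct H2E as [E1 [E2 [_ [_ [_ Hall]]]]].
  assert (tr3 : forall E E' E'', same_family G E E'' -> same_family G E' E'' -> same_family G E E').
  { intros E E' E'' a b A. rewrite (a A), (b A). tauto. }
  destruct (Hall EX eX) as [a|a]; destruct (Hall EY eY) as [b|b]; destruct (Hall EZ eZ) as [c|c];
    eauto.
Qed.

Lemma exists_A : exists A, coarsely_clopen G bdd A /\ ~ bdd A /\ ~ bdd (fun x => ~ A x).
Proof.
  destruct H2E as [E1 [E2 [e1 [e2 [Hd _]]]]].
  assert (key : forall E E', is_end G bdd E -> is_end G bdd E' -> forall X, E X -> ~ E' X ->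
     exists A, coarsely_clopen G bdd A /\ ~ bdd A /\ ~ bdd (fun x => ~ A x)).
  { intros E E' eE eE' X EX nE'X. exists X.
    destruct (proj1 (proj1 eE) X EX) as [uX cX]. split; auto. split; auto.
    intro Hb. apply nE'X.
    apply (proj2 eE' (fun A => E' A \/ A = X)); auto.
    split.
    - intros A [HA| ->]; auto. apply (proj1 (proj1 eE')); auto.
    - intros l Hl Hf Hbl.
      assert (Hsplit : forall l, Forall (fun A => E' A \/ A = X) l -> exists l',
        Forall E' l' /\ forall x, X x -> bigI G l' x -> bigI G l x).
      { clear. induction l as [|a l IH]; intros Hf.
        - exists nil. split. constructor. intros x _ _. unfold bigI. apply Forall_nil.
        - inversion Hf as [|? ? Ha Hl]; subst. destruct (IH Hl) as [l' [H1 H2]].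
          destruct Ha as [Ha | ->].
          + exists (a :: l'). split. constructor; auto.
            intros x Xx Hx. destruct (proj1 (bigI_cons _ _ _) Hx). apply bigI_cons; auto.
          + exists l'. split; auto. intros x Xx Hx. apply bigI_cons; auto. }
      destruct (Hsplit l Hf) as [l' [Hl' Himp]].
      destruct l' as [|a l''].
      + apply uX. eapply bdd_sub. exact Hbl. intros x Xx. apply Himp; auto. constructor.
      + apply (proj2 (proj1 eE') (a :: l'')). discriminate. auto.
        eapply bdd_union'. exact Hbl. exact Hb.
        intros x Hx. destruct (classic (X x)); auto.
  }
  destruct (classic (exists X, E1 X /\ ~ E2 X)) as [[X [H1 H2]]|Hn].
  - exact (key E1 E2 e1 e2 X H1 H2).
  - destruct (classic (exists X, E2 X /\ ~ E1 X)) as [[Y [H3 H4]]|Hn'].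
    + exact (key E2 E1 e2 e1 Y H3 H4).
    + exfalso. apply Hd. intro A. split; intro H; apply NNPP; intro; eauto.
Qed.

Lemma dichotomy (A S : G -> Prop) : coarsely_clopen G bdd A -> ~ bdd A -> ~ bdd (fun x => ~ A x) ->
  coarsely_clopen G bdd S -> ~ bdd S -> ~ bdd (fun x => ~ S x) ->
  (bdd (fun x => S x /\ ~ A x) /\ bdd (fun x => ~ S x /\ A x)) \/
  (bdd (fun x => S x /\ A x) /\ bdd (fun x => ~ S x /\ ~ A x)).
Proof.
  intros cA uA uA' cS uS uS'.
  set (a := fun x => S x /\ A x). set (b := fun x => S x /\ ~ A x).
  set (c := fun x => ~ S x /\ A x). set (d := fun x => ~ S x /\ ~ A x).
  assert (ca : coarsely_clopen G bdd a) by (apply ccl_inter; auto).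
  assert (cb : coarsely_clopen G bdd b) by (apply ccl_inter; auto using ccl_compl).
  assert (cc : coarsely_clopen G bdd c) by (apply ccl_inter; auto using ccl_compl).
  assert (cd : coarsely_clopen G bdd d) by (apply ccl_inter; auto using ccl_compl).
  assert (pAc : ~ (bdd a /\ bdd c)).
  { intros [Ha Hc]. apply uA. eapply bdd_union'. exact Ha. exact Hc. intros x Ax.
    unfold a, c. destruct (classic (S x)); auto. }
  assert (pBd : ~ (bdd b /\ bdd d)).
  { intros [Ha Hc]. apply uA'. eapply bdd_union'. exact Ha. exact Hc. intros x Ax.
    unfold b, d. destruct (classic (S x)); auto. }
  assert (pab : ~ (bdd a /\ bdd b)).
  { intros [Ha Hc]. apply uS. eapply bdd_union'. exact Ha. exact Hc. intros x Ax.
    unfold a, b. destruct (classic (A x)); auto. }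
  assert (pcd : ~ (bdd c /\ bdd d)).
  { intros [Ha Hc]. apply uS'. eapply bdd_union'. exact Ha. exact Hc. intros x Ax.
    unfold c, d. destruct (classic (A x)); auto. }
  assert (D : forall X Y : G -> Prop, (forall x, X x -> Y x -> False) -> bdd (fun x => X x /\ Y x)).
  { intros X Y H. eapply bdd_sub. apply bdd_empty. intros x [? ?]. eauto. }
  assert (dab : bdd (fun x => a x /\ b x)) by (apply D; unfold a, b; tauto).
  assert (dac : bdd (fun x => a x /\ c x)) by (apply D; unfold a, c; tauto).
  assert (dad : bdd (fun x => a x /\ d x)) by (apply D; unfold a, d; tauto).
  assert (dbc : bdd (fun x => b x /\ c x)) by (apply D; unfold b, c; tauto).
  assert (dbd : bdd (fun x => b x /\ d x)) by (apply D; unfold b, d; tauto).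
  assert (dcd : bdd (fun x => c x /\ d x)) by (apply D; unfold c, d; tauto).
  destruct (classic (bdd a)) as [Ba|Ua]; destruct (classic (bdd b)) as [Bb|Ub];
  destruct (classic (bdd c)) as [Bc|Uc]; destruct (classic (bdd d)) as [Bd|Ud];
  try tauto;
  solve [ exfalso; eapply (three_ends a b c); eauto
        | exfalso; eapply (three_ends a b d); eauto
        | exfalso; eapply (three_ends a c d); eauto
        | exfalso; eapply (three_ends b c d); eauto ].
Qed.

Definition approx (P Q : G -> Prop) : Prop :=
  bdd (fun x => P x /\ ~ Q x) /\ bdd (fun x => Q x /\ ~ P x).

Lemma approx_ext P Q P' Q' : (forall x, P x <-> P' x) -> (forall x, Q x <-> Q' x) ->
  approx P Q -> approx P' Q'.
Proof.
  intros HP HQ [H1 H2]. split.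
  - eapply bdd_sub. exact H1. intros x [a b]. rewrite HP, HQ. auto.
  - eapply bdd_sub. exact H2. intros x [a b]. rewrite HP, HQ. auto.
Qed.
Lemma approx_trans P Q R : approx P Q -> approx Q R -> approx P R.
Proof.
  intros [H1 H2] [H3 H4]. split.
  - eapply bdd_union'. exact H1. exact H3. intros x [a b]. destruct (classic (Q x)); auto.
  - eapply bdd_union'. exact H4. exact H2. intros x [a b]. destruct (classic (Q x)); auto.
Qed.
Lemma approx_sym P Q : approx P Q -> approx Q P.
Proof. intros [? ?]; split; auto. Qed.
Lemma approx_compl P Q : approx P Q -> approx (fun x => ~ P x) (fun x => ~ Q x).
Proof.
  intros [H1 H2]. split.
  - eapply bdd_sub. exact H2. intros x [a b]. split; auto. apply NNPP; auto.
  - eapply bdd_sub. exact H1. intros x [a b]. split; auto. apply NNPP; auto.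
Qed.
Lemma approx_tr g P Q : approx P Q -> approx (tr g P) (tr g Q).
Proof. intros [H1 H2]. split; [apply (bdd_tr g _ H1)|apply (bdd_tr g _ H2)]. Qed.

Lemma tr_comp a b X x : tr (a · b) X x <-> tr a (tr b X) x.
Proof. unfold tr. rewrite inv_mul, mulA. tauto. Qed.

Definition Stab (X : G -> Prop) (g : G) := approx (tr g X) X.
Definition Flip (X : G -> Prop) (g : G) := approx (tr g X) (fun x => ~ X x).

Lemma Flip_Stab X a b : Flip X a -> Stab X b -> Flip X (a · b).
Proof.
  intros Ha Hb. unfold Flip.
  apply approx_trans with (Q := tr a X); auto.
  eapply approx_ext. intro x; symmetry; apply tr_comp. intro; reflexivity.
  apply approx_tr. auto.
Qed.
Lemma Flip_Flip X a b : Flip X a -> Flip X b -> Stab X (a · b).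
Proof.
  intros Ha Hb. unfold Stab.
  assert (H1 : approx (tr a (tr b X)) (tr a (fun x => ~ X x))) by (apply approx_tr; auto).
  assert (H2 : approx (tr a (fun x => ~ X x)) X).
  { eapply approx_ext; [| |apply (approx_compl _ _ Ha)].
    intro x; unfold tr; tauto. intro x; split; [apply NNPP|auto]. }
  eapply approx_ext; [| |apply (approx_trans _ _ _ H1 H2)].
  intro x; symmetry; apply tr_comp. intro; tauto.
Qed.

Lemma Stab_Flip_excl X g : ~ bdd X -> Stab X g -> Flip X g -> False.
Proof.
  intros HX H1 H2. apply HX. destruct (approx_trans _ _ _ (approx_sym _ _ H1) H2) as [H _].
  eapply bdd_sub. exact H. intros x Hx. split; auto.
Qed.

Lemma tr_inv_apply y X z : tr (ginv y) X z <-> X (y · z).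
Proof. unfold tr. rewrite inv_inv. tauto. Qed.

Definition good (X : G -> Prop) :=
  coarsely_clopen G bdd X /\ ~ bdd X /\ ~ bdd (fun x => ~ X x) /\ forall g, Stab X g \/ Flip X g.

Lemma good_A A : coarsely_clopen G bdd A -> ~ bdd A -> ~ bdd (fun x => ~ A x) -> good A.
Proof.
  intros cA uA uA'. split; auto. split; auto. split; auto. intro g.
  assert (uS : ~ bdd (tr g A)) by (intro H; apply uA; eapply bdd_tr_inv; eauto).
  assert (uS' : ~ bdd (fun x => ~ tr g A x)).
  { intro H. apply uA'. apply (bdd_tr_inv g). eapply bdd_sub. exact H. unfold tr; auto. }
  destruct (dichotomy A (tr g A) cA uA uA' (ccl_tr A g cA) uS uS') as [[H1 H2]|[H1 H2]].
  - left. unfold Stab, approx. split; auto. eapply bdd_sub. exact H2. intros x [a b]; split; auto.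
  - right. unfold Flip, approx. split. eapply bdd_sub. exact H1. intros x [a b]. split; auto. apply NNPP; auto.
    eapply bdd_sub. exact H2. intros x Hx. destruct Hx as [a b]. split; auto.
Qed.

Lemma Stab_compl X g : Stab X g -> Stab (fun x => ~ X x) g.
Proof.
  intro H. unfold Stab. eapply approx_ext; [| |apply (approx_compl _ _ H)].
  intro; unfold tr; tauto. intro; tauto.
Qed.
Lemma Flip_compl X g : Flip X g -> Flip (fun x => ~ X x) g.
Proof.
  intro H. unfold Flip. eapply approx_ext; [| |apply (approx_compl _ _ H)].
  intro; unfold tr; tauto. intro; tauto.
Qed.

Lemma good_compl X : good X -> good (fun x => ~ X x).
Proof.
  intros [c [u [u' H]]]. split. apply ccl_compl; auto. split; auto. split.
  intro Hb. apply u. eapply bdd_sub. exact Hb. intros x Hx Hn; auto.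
  intro g. destruct (H g); [left; apply Stab_compl|right; apply Flip_compl]; auto.
Qed.

Definition Lset (D : G -> Prop) : G -> Prop := fun x => exists n, Ball D n x.

Section LsetS.
Variable D : G -> Prop.
Hypothesis D1 : D gone.
Hypothesis Dsym : forall d, D d -> D (ginv d).

Lemma L_one : Lset D gone. Proof. exists 0. reflexivity. Qed.
Lemma L_mul a b : Lset D a -> Lset D b -> Lset D (a · b).
Proof. intros [m Ha] [n Hb]. exists (m + n). apply Ball_mul; auto. Qed.
Lemma L_inv a : Lset D a -> Lset D (ginv a).
Proof. intros [m Ha]. exists m. apply Ball_inv; auto. Qed.
Lemma L_D d : D d -> Lset D d.
Proof. intro. exists 1. apply Ball_one; auto. Qed.
End LsetS.

Lemma alg1 (a b c : G) : ginv (a · ginv b) · (a · c) = b · c.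
Proof. rewrite inv_mul, inv_inv, <- mulA, mulKl. reflexivity. Qed.

Lemma coset_contra X D Q (l : list G) y :
  good X -> D gone -> (forall d, D d -> D (ginv d)) -> ~ bdd (Lset D) ->
  (forall z, (forall m, Lset D m -> ~ Q (z · m)) -> forall m, Lset D m -> (X (z · m) <-> X z)) ->
  (forall z m, Lset D m -> Q (z · m) -> exists g, In g l /\ exists m', Lset D m' /\ z = g · m') ->
  ((forall g, Stab X g) \/ (exists u, Flip X u /\ Lset D u)) ->
  (forall m, Lset D m -> X (y · m)) -> False.
Proof.
  intros [cX [uX [uX' Hsf]]] D1 Dsym uL HQc HQl Hw Hy.
  destruct Hw as [Hall | [u [Fu Lu]]].
  - apply uX'. eapply bdd_sub.
    apply (bdd_list_union l (fun g x => tr (g · ginv y) X x /\ ~ X x)).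
    { intros g _. apply (proj1 (Hall _)). }
    intros x nXx. destruct (classic (exists m, Lset D m /\ Q (x · m))) as [[m [Lm Qm]]|Hn].
    + destruct (HQl x m Lm Qm) as [g [Hg [m' [Lm' ->]]]]. exists g. split; auto. split; auto.
      unfold tr. rewrite alg1. apply Hy; auto.
    + exfalso. apply uL. eapply bdd_sub.
      apply (bdd_tr (ginv x) _ (proj1 (Hall (x · ginv y)))).
      intros m Lm. apply tr_inv_apply. split.
      * unfold tr. rewrite alg1. apply Hy; auto.
      * rewrite (HQc x). auto. intros m' Lm' Qm'. apply Hn; eauto. auto.
  - assert (Hg1 : forall m, Lset D m -> tr (ginv y) X m).
    { intros m Lm. apply tr_inv_apply. auto. }
    assert (Hg2 : forall m, Lset D m -> tr (u · ginv y) X m).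
    { intros m Lm. unfold tr. rewrite inv_mul, inv_inv, <- mulA. apply Hy.
      apply L_mul; auto. apply L_inv; auto. }
    apply uL. destruct (Hsf (ginv y)) as [S1|F1].
    + pose proof (Flip_Stab X u _ Fu S1) as F2.
      eapply bdd_union'. exact (proj1 S1). exact (proj1 F2).
      intros m Lm. destruct (classic (X m)); [right|left]; split; auto.
    + pose proof (Flip_Flip X u _ Fu F1) as S2.
      eapply bdd_union'. exact (proj1 S2). exact (proj1 F1).
      intros m Lm. destruct (classic (X m)); [right|left]; split; auto.
Qed.

Hypothesis HBG : bounded_geometry G bdd.

Lemma fin_index A D K : good A -> bdd D -> D gone -> (forall d, D d -> D (ginv d)) ->
  bdd K -> (forall B, bdd B -> exists l : list G, forall x, B x -> exists g, In g l /\ ltrans G g K x) ->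
  (forall k, K k -> D k) -> ~ bdd (Lset D) ->
  ((forall g, Stab A g) \/ (exists u, Flip A u /\ Lset D u)) ->
  exists l : list G, forall x, exists f, In f l /\ exists m, Lset D m /\ x = f · m.
Proof.
  intros gA bD D1 Dsym bK HK KD uL Hw.
  destruct gA as [cA rest].
  set (Q := fun z => (A z /\ exists d, D d /\ ~ A (z · d)) \/ (~ A z /\ exists d, D d /\ A (z · d))).
  assert (bQ : bdd Q) by (apply bdd_union; [apply ccl_bd|apply ccl_bd']; auto).
  destruct (HK Q bQ) as [lQ HlQ].
  apply NNPP. intro Hn.
  assert (Hy : exists y, ~ exists f, In f lQ /\ exists m, Lset D m /\ y = f · m).
  { apply NNPP. intro H. apply Hn. exists lQ. intro x. apply NNPP. intro H'. apply H. eauto. }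
  destruct Hy as [y Hy].
  assert (HQc : forall z, (forall m, Lset D m -> ~ Q (z · m)) -> forall m, Lset D m -> (A (z · m) <-> A z)).
  { intros z Hz m [n Hm]. revert m Hm. induction n as [|n IH]; intros m Hm; simpl in Hm.
    - subst. rewrite mul1r. tauto.
    - destruct Hm as [m' [d [Hm' [Dd ->]]]]. rewrite <- (IH m' Hm').
      assert (nQ : ~ Q (z · m')) by (apply Hz; exists n; auto).
      unfold Q in nQ. rewrite mulA.
      destruct (classic (A (z · m'))); destruct (classic (A (z · m' · d))); try tauto;
      exfalso; apply nQ; eauto. }
  assert (HQl : forall z m, Lset D m -> Q (z · m) -> exists g, In g lQ /\ exists m', Lset D m' /\ z = g · m').
  { intros z m Lm Qm. destruct (HlQ _ Qm) as [g [Hg [k [Kk Ek]]]].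
    exists g. split; auto. exists (k · ginv m). split.
    apply L_mul; auto. apply L_D; auto. apply L_inv; auto.
    rewrite mulA, <- Ek, mulKl'. reflexivity. }
  assert (HyQ : forall m, Lset D m -> ~ Q (y · m)).
  { intros m Lm Qm. apply Hy. apply (HQl y m Lm Qm). }
  destruct (classic (A y)) as [Ay|nAy].
  - apply (coset_contra A D Q lQ y); auto. split; auto.
    intros m Lm. rewrite (HQc y HyQ m Lm). auto.
  - apply (coset_contra (fun x => ~ A x) D Q lQ y); auto.
    + apply good_compl. split; auto.
    + intros z Hz m Lm. rewrite (HQc z Hz m Lm). tauto.
    + destruct Hw as [H|[u [Fu Lu]]]; [left|right].
      intro g; apply Stab_compl; auto. exists u; split; auto; apply Flip_compl; auto.
    + intros m Lm. rewrite (HQc y HyQ m Lm). auto.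
Qed.

Lemma gpow_S_r (a : G) n : gpow G a (S n) = gpow G a n · a.
Proof.
  induction n as [|n IH]; simpl. rewrite mul1r, mul1l. reflexivity.
  rewrite <- (mulA a (gpow G a n) a), <- IH. reflexivity.
Qed.
Lemma gpow_add (a : G) m n : gpow G a (m + n) = gpow G a m · gpow G a n.
Proof.
  induction m as [|m IH]; simpl. rewrite mul1l; reflexivity. rewrite IH, mulA. reflexivity.
Qed.
Lemma gpow_inv (a : G) n : ginv (gpow G a n) = gpow G (ginv a) n.
Proof.
  induction n as [|n IH]. simpl. apply inv_one.
  simpl gpow at 1. rewrite inv_mul, IH, gpow_S_r. reflexivity.
Qed.

Section Conn.
Variables Sg K : G -> Prop.
Hypothesis bS : bdd Sg.
Hypothesis S1 : Sg gone.
Hypothesis Ssym : forall s, Sg s -> Sg (ginv s).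
Hypothesis HK : forall B, bdd B -> exists l : list G, forall x, B x -> exists g, In g l /\ ltrans G g K x.
Hypothesis KS : forall k, K k -> Sg k.
Hypothesis Gcov : forall x, exists n, Ball Sg n x.

Lemma list_in_ball (l : list G) : exists r, forall g, In g l -> Ball Sg r g.
Proof.
  induction l as [|a l [r IH]].
  - exists 0. intros g [].
  - destruct (Gcov a) as [n Hn]. exists (Nat.max n r). intros g [<-|Hg].
    + apply (Ball_le Sg n); auto. lia.
    + apply (Ball_le Sg r); auto. lia.
Qed.

Lemma bdd_in_ball Y : bdd Y -> exists r, forall y, Y y -> Ball Sg r y.
Proof.
  intro HY. destruct (HK Y HY) as [l Hl]. destruct (list_in_ball l) as [r Hr].
  exists (r + 1). intros y Yy. destruct (Hl y Yy) as [g [Hg [k [Kk ->]]]].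
  apply Ball_mul; auto. apply Ball_one; auto.
Qed.

Lemma crossing (X : G -> Prop) r :
  (forall z s, X z -> Sg s -> ~ X (z · s) -> Ball Sg r z) ->
  forall n w y, Ball Sg n w -> X y -> ~ X (y · w) -> Ball Sg (r + n) y.
Proof.
  intros HX n w y Hw Xy nX.
  assert (Hv : exists v, Ball Sg n v /\ Ball Sg r (y · v)).
  { revert w Hw nX. induction n as [|n IH]; intros w Hw nX; simpl in Hw.
    - subst. rewrite mul1r in nX. contradiction.
    - destruct Hw as [w' [s [Hw' [Ss ->]]]].
      destruct (classic (X (y · w'))) as [Xw|nXw].
      + exists w'. split. apply Ball_S; auto. apply (HX _ s); auto. rewrite <- mulA. auto.
      + destruct (IH w' Hw' nXw) as [v [Hv1 Hv2]]. exists v. split; auto. apply Ball_S; auto. }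
  destruct Hv as [v [Hv1 Hv2]].
  replace y with ((y · v) · ginv v) by apply mulKl'.
  apply Ball_mul; auto. apply Ball_inv; auto.
Qed.

Lemma pigeon (a : G) r M : 2 <= r -> (forall k, 1 <= k -> ~ Ball Sg r (gpow G a k)) ->
  (forall m, Ball Sg M (gpow G a (S m))) -> False.
Proof.
  intros r2 Hsep HM.
  destruct (HK (Ball Sg M) (Ball_bdd Sg M bS)) as [l Hl].
  set (f := fun m => proj1_sig (constructive_indefinite_description _ (Hl _ (HM m)))).
  assert (Hf : forall m, In (f m) l /\ ltrans G (f m) K (gpow G a (S m))).
  { intro m. unfold f. destruct (constructive_indefinite_description _ _) as [g Hg]. exact Hg. }
  assert (Hcol : exists i j, i < j /\ f i = f j).
  { apply NNPP. intro Hn.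
    assert (Hnd : NoDup (map f (seq 0 (S (length l))))).
    { apply NoDup_map_NoDup_ForallPairs; [|apply seq_NoDup].
      intros i j _ _ Hij. destruct (Nat.lt_total i j) as [H|[H|H]]; auto;
        exfalso; apply Hn; eauto. }
    apply NoDup_incl_length with (l' := l) in Hnd.
    rewrite length_map, length_seq in Hnd. lia.
    intros g Hg. apply in_map_iff in Hg as [m [<- _]]. apply Hf. }
  destruct Hcol as [i [j [Hij Efij]]].
  destruct (Hf i) as [_ [k1 [Kk1 E1]]]. destruct (Hf j) as [_ [k2 [Kk2 E2]]].
  apply (Hsep (j - i)). lia.
  assert (Ej : gpow G a (S j) = gpow G a (S i) · gpow G a (j - i)).
  { rewrite <- gpow_add. f_equal. lia. }
  assert (Ek : gpow G a (j - i) = ginv k1 · k2).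
  { rewrite <- (mulKl (gpow G a (S i)) (gpow G a (j - i))), <- Ej, E1, E2, Efij, inv_mul, <- mulA, mulKl.
    reflexivity. }
  rewrite Ek. apply (Ball_le Sg 2); auto. apply (Ball_mul Sg 1 1); apply Ball_one; auto.
Qed.

Section Nest.
Variable A : G -> Prop.
Hypothesis gA : good A.
Variable r : nat.
Hypothesis r2 : 2 <= r.
Hypothesis HbA : forall z s, A z -> Sg s -> ~ A (z · s) -> Ball Sg r z.
Hypothesis HbA' : forall z s, ~ A z -> Sg s -> ~ ~ A (z · s) -> Ball Sg r z.
Variable t : G.
Hypothesis Stt : Stab A t.
Hypothesis Htw : forall w, Ball Sg r w -> A (t · w) /\ ~ Ball Sg r (t · w).

Let s := ginv t.

Lemma Br1 : Ball Sg r gone.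
Proof. apply (Ball_le Sg 0); auto. lia. reflexivity. Qed.

Lemma claim1 w : Ball Sg r w -> (A (s · w) <-> A s).
Proof.
  intro Hw.
  assert (key : forall v, Ball Sg r v -> Ball Sg r (s · v) -> False).
  { intros v Hv Hsv. apply (proj2 (Htw _ Hsv)). unfold s. rewrite mulKr. auto. }
  split; intro H; apply NNPP; intro H'.
  -
    assert (Hc : exists v, Ball Sg r v /\ Ball Sg r (s · v)).
    { clear key. revert H H'.
      assert (G1 : forall n w, Ball Sg n w -> A (s · w) -> ~ A s -> exists v, Ball Sg n v /\ Ball Sg r (s · v)).
      { induction n as [|n IH]; intros w' Hw' H1 H2; simpl in Hw'.
        - subst. rewrite mul1r in H1. contradiction.
        - destruct Hw' as [w'' [x [Hw'' [Sx ->]]]].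
          destruct (classic (A (s · w''))) as [Aw|nAw].
          + destruct (IH w'' Hw'' Aw H2) as [v [Hv1 Hv2]]. exists v. split; auto. apply Ball_S; auto.
          + exists w''. split. apply Ball_S; auto. apply (HbA' _ x); auto. rewrite <- mulA. auto. }
      intros; eapply G1; eauto. }
    destruct Hc as [v [Hv Hsv]]. eauto.
  - assert (Hc : exists v, Ball Sg r v /\ Ball Sg r (s · v)).
    { clear key. revert H H'.
      assert (G1 : forall n w, Ball Sg n w -> ~ A (s · w) -> A s -> exists v, Ball Sg n v /\ Ball Sg r (s · v)).
      { induction n as [|n IH]; intros w' Hw' H1 H2; simpl in Hw'.
        - subst. rewrite mul1r in H1. contradiction.
        - destruct Hw' as [w'' [x [Hw'' [Sx ->]]]].
          destruct (classic (A (s · w''))) as [Aw|nAw].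
          + exists w''. split. apply Ball_S; auto. apply (HbA _ x); auto. rewrite <- mulA. auto.
          + destruct (IH w'' Hw'' nAw H2) as [v [Hv1 Hv2]]. exists v. split; auto. apply Ball_S; auto. }
      intros; eapply G1; eauto. }
    destruct Hc as [v [Hv Hsv]]. eauto.
Qed.

Lemma claim2 n c : Ball Sg n c -> ~ A c -> (A (s · c) <-> A s).
Proof.
  revert c. induction n as [|n IH]; intros c Hc nAc; simpl in Hc.
  - subst. rewrite mul1r. tauto.
  - destruct (classic (Ball Sg r c)) as [Hr|Hr]. apply claim1; auto.
    destruct Hc as [c' [x [Hc' [Sx ->]]]].
    assert (nAc' : ~ A c').
    { intro Ac'. apply Hr. apply (HbA' _ (ginv x)); auto. rewrite mulKl'. auto. }
    rewrite <- (IH c' Hc' nAc'). rewrite mulA.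
    destruct (classic (A (s · c'))) as [H1|H1]; destruct (classic (A (s · c' · x))) as [H2|H2]; try tauto.
    + exfalso. apply nAc'. replace c' with (t · (s · c')) by (unfold s; apply mulKr).
      apply Htw. apply (HbA _ x); auto.
    + exfalso. apply nAc'. replace c' with (t · (s · c')) by (unfold s; apply mulKr).
      apply Htw. apply (HbA' _ x); auto.
Qed.

Lemma nAs : ~ A s.
Proof.
  destruct gA as [_ [_ [uA' _]]]. intro As. apply uA'.
  eapply bdd_sub. apply (proj1 Stt). intros c nAc. split; auto.
  unfold tr. change (A (s · c)). destruct (Gcov c) as [n Hn]. rewrite (claim2 n c Hn nAc). auto.
Qed.

Lemma F1 c : A (s · c) -> A c.
Proof.
  intro H. apply NNPP. intro nAc. destruct (Gcov c) as [n Hn].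
  apply nAs. rewrite <- (claim2 n c Hn nAc). auto.
Qed.

Lemma F2 w : Ball Sg r w -> ~ A (s · w).
Proof. intros Hw H. apply nAs. rewrite <- (claim1 w Hw). auto. Qed.

Lemma Ct : bdd (fun x => A x /\ ~ A (s · x)).
Proof. eapply bdd_sub. apply (proj2 Stt). intros x [Ax nA]. split; auto. Qed.

Lemma At m : A (gpow G t (S m)).
Proof.
  induction m as [|m IH].
  - simpl. rewrite mul1r. rewrite <- (mul1r t). apply Htw. apply Br1.
  - change (A (t · gpow G t (S m))). apply F1. unfold s. rewrite mulKl. auto.
Qed.

Lemma As' m : ~ A (gpow G s (S m)).
Proof.
  induction m as [|m IH].
  - simpl. rewrite mul1r. rewrite <- (mul1r s). apply F2. apply Br1.
  - change (~ A (s · gpow G s (S m))). intro H. apply IH. apply F1. auto.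
Qed.

Lemma sep_t k : 1 <= k -> ~ Ball Sg r (gpow G t k).
Proof.
  intros Hk Hb. destruct k as [|k]. lia. destruct k as [|k].
  - simpl in Hb. rewrite mul1r in Hb. apply (proj2 (Htw gone Br1)). rewrite mul1r. auto.
  - apply (F2 _ Hb). change (A (s · (t · gpow G t (S k)))). unfold s. rewrite mulKl. apply At.
Qed.

Lemma sep_s k : 1 <= k -> ~ Ball Sg r (gpow G s k).
Proof.
  intros Hk Hb. apply (sep_t k Hk). apply Ball_inv in Hb; auto.
  unfold s in Hb. rewrite gpow_inv, inv_inv in Hb. auto.
Qed.

Lemma orb1 x : exists m, A (gpow G t m · x).
Proof.
  apply NNPP. intro Hn. destruct (Gcov x) as [L HL].
  apply (pigeon t r (r + L)); auto. apply sep_t.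
  intro m. apply (crossing A r HbA L x); auto. apply At. intro H. apply Hn. eauto.
Qed.

Lemma orb2 x : exists n, ~ A (gpow G s n · x).
Proof.
  apply NNPP. intro Hn. destruct (Gcov x) as [L HL].
  apply (pigeon s r (r + L)); auto. apply sep_s.
  intro m. apply (crossing (fun y => ~ A y) r HbA' L x); auto. apply As'.
  intro H. apply H. apply NNPP. intro H'. apply Hn. eauto.
Qed.

Lemma down n x : A x -> ~ A (gpow G s n · x) -> exists j, A (gpow G s j · x) /\ ~ A (gpow G s (S j) · x).
Proof.
  revert x. induction n as [|n IH]; intros x Ax nA.
  - simpl in nA. rewrite mul1l in nA. contradiction.
  - destruct (classic (A (gpow G s n · x))) as [H|H].
    + exists n. auto.
    + apply IH; auto.
Qed.


Definition Hcyc : G -> Prop := fun x => exists n, x = gpow G t n \/ x = ginv (gpow G t n).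

Lemma mix1 a b : Hcyc (gpow G t a · ginv (gpow G t b)).
Proof.
  destruct (le_lt_dec b a) as [H|H].
  - exists (a - b). left. replace a with ((a - b) + b) at 1 by lia.
    rewrite gpow_add, mulKl'. reflexivity.
  - exists (b - a). right. replace b with ((b - a) + a) at 1 by lia.
    rewrite gpow_add, inv_mul, mulKr. reflexivity.
Qed.
Lemma mix2 a b : Hcyc (ginv (gpow G t a) · gpow G t b).
Proof.
  destruct (le_lt_dec a b) as [H|H].
  - exists (b - a). left. replace b with (a + (b - a)) at 1 by lia.
    rewrite gpow_add, mulKl. reflexivity.
  - exists (a - b). right. replace a with (b + (a - b)) at 1 by lia.
    rewrite gpow_add, inv_mul, mulKr'. reflexivity.
Qed.

Lemma Hcyc_sub : subgroup G Hcyc.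
Proof.
  split; [|split].
  - exists 0. left. reflexivity.
  - intros x y [a [->| ->]] [b [->| ->]].
    + exists (a + b). left. rewrite gpow_add. reflexivity.
    + apply mix1.
    + apply mix2.
    + exists (b + a). right. rewrite gpow_add, inv_mul. reflexivity.
  - intros x [a [->| ->]]; exists a; [right|left]; auto. apply inv_inv.
Qed.

Lemma final_H : exists H, subgroup G H /\ infinite_cyclic G H /\ bounded_index G bdd H.
Proof.
  exists Hcyc. split; [apply Hcyc_sub|split].
  - exists t. split.
    + intros n Hn E. apply (sep_t n). lia. rewrite E. apply Br1.
    + intro x. reflexivity.
  - exists (fun b => A (ginv b) /\ ~ A (s · ginv b)). split.
    + apply (bdd_inv (fun x => A x /\ ~ A (s · x))). apply Ct.
    + intro x. destruct (orb1 (ginv x)) as [m Hm].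
      destruct (orb2 (gpow G t m · ginv x)) as [n Hn].
      destruct (down n _ Hm Hn) as [j [Hj1 Hj2]].
      exists (ginv (gpow G s j · (gpow G t m · ginv x))), (ginv (gpow G t j) · gpow G t m).
      split; [|split].
      * rewrite inv_inv. split; auto. change (gpow G s (S j)) with (s · gpow G s j) in Hj2.
        rewrite <- mulA in Hj2. auto.
      * apply mix2.
      * unfold s. rewrite <- gpow_inv. rewrite !inv_mul, !inv_inv.
        rewrite <- (mulA (x · ginv (gpow G t m))), mulKr, mulKr'. reflexivity.
Qed.

End Nest.
End Conn.

Lemma Ball_sub D D' n x : (forall y, D y -> D' y) -> Ball D n x -> Ball D' n x.
Proof.
  intro HD. revert x. induction n as [|n IH]; intros x Hx; simpl in *; auto.
  destruct Hx as [a [d [Ha [Dd ->]]]]. exists a, d. auto.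
Qed.

Lemma main_glue : ~ locally_bounded G bdd ->
  exists H, subgroup G H /\ infinite_cyclic G H /\ bounded_index G bdd H.
Proof.
  intro nLB.
  destruct exists_A as [A [cA [uA uA']]].
  pose proof (good_A A cA uA uA') as gA.
  destruct HBG as [K [bK HK]].
  destruct (not_all_ex_not _ _ nLB) as [B0 HB0].
  apply imply_to_and in HB0. destruct HB0 as [bB0 uB0].
  assert (Hw : exists u, (forall g, Stab A g) \/ Flip A u).
  { destruct (classic (forall g, Stab A g)) as [H|H]. exists gone; auto.
    destruct (not_all_ex_not _ _ H) as [u Hu]. exists u. right.
    destruct (proj2 (proj2 (proj2 gA)) u); tauto. }
  destruct Hw as [u Hu].
  set (D := fun x => x = gone \/ B0 x \/ B0 (ginv x) \/ K x \/ K (ginv x) \/ x = u \/ x = ginv u).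
  assert (bD : bdd D).
  { repeat apply bdd_union; auto using bdd_single, bdd_inv. }
  assert (D1 : D gone) by (left; auto).
  assert (Dsym : forall d, D d -> D (ginv d)).
  { intros d Hd. unfold D in *. rewrite !inv_inv.
    destruct Hd as [-> | [H | [H | [H | [H | [-> | ->]]]]]]; rewrite ?inv_one, ?inv_inv; tauto. }
  assert (KD : forall k, K k -> D k) by (intros; unfold D; tauto).
  assert (uL : ~ bdd (Lset D)).
  { intro H. apply uB0. eapply bdd_sub. exact H. intros x Hx. apply Hx.
    - split. apply L_one. split. apply L_mul; auto. apply L_inv; auto.
    - intros b Hb. apply L_D; auto. unfold D; tauto. }
  assert (Hw : (forall g, Stab A g) \/ (exists u, Flip A u /\ Lset D u)).
  { destruct Hu as [H|H]; [left; auto|right]. exists u. split; auto. apply L_D; auto. unfold D; tauto. }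
  destruct (fin_index A D K gA bD D1 Dsym bK HK KD uL Hw) as [l Hl].
  set (Sg := fun x => D x \/ exists f, In f l /\ (x = f \/ x = ginv f)).
  assert (bS : bdd Sg).
  { apply bdd_union; auto. apply (bdd_list_union l (fun f x => x = f \/ x = ginv f)).
    intros g _. apply bdd_union; apply bdd_single. }
  assert (S1 : Sg gone) by (left; auto).
  assert (Ssym : forall s, Sg s -> Sg (ginv s)).
  { intros x [Hx|[f [Hf [->| ->]]]]. left; auto. right; eauto. right. exists f. rewrite inv_inv; auto. }
  assert (KS : forall k, K k -> Sg k) by (intros; left; auto).
  assert (Gcov : forall x, exists n, Ball Sg n x).
  { intro x. destruct (Hl x) as [f [Hf [m [[n Hm] ->]]]]. exists (1 + n).
    apply Ball_mul. apply Ball_one. right; eauto. eapply Ball_sub; [|exact Hm]. intros; left; auto. }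
  destruct gA as [cA' [uA2 [uA2' Hsf]]].
  set (Z := fun z => (A z /\ exists d, Sg d /\ ~ A (z · d)) \/ (~ A z /\ exists d, Sg d /\ A (z · d))).
  assert (bZ : bdd Z) by (apply bdd_union; [apply ccl_bd|apply ccl_bd']; auto).
  destruct (bdd_in_ball Sg K S1 HK KS Gcov Z bZ) as [r0 Hr0].
  set (r := r0 + 2).
  assert (r2 : 2 <= r) by (unfold r; lia).
  assert (HbA : forall z s, A z -> Sg s -> ~ A (z · s) -> Ball Sg r z).
  { intros z s Az Ss nA. apply (Ball_le Sg r0); auto. unfold r; lia. apply Hr0. left. eauto. }
  assert (HbA' : forall z s, ~ A z -> Sg s -> ~ ~ A (z · s) -> Ball Sg r z).
  { intros z s Az Ss nA. apply (Ball_le Sg r0); auto. unfold r; lia. apply Hr0. right.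
    split; auto. exists s. split; auto. apply NNPP; auto. }
  destruct (Gcov u) as [mu Hmu].
  set (k := mu + r).
  assert (Hx : exists x, A x /\ ~ Ball Sg (r + k) x).
  { apply NNPP. intro Hn. apply uA. eapply bdd_sub. apply (Ball_bdd Sg (r + k) bS).
    intros x Ax. apply NNPP. intro H. apply Hn. eauto. }
  destruct Hx as [x [Ax nBx]].
  assert (deep : forall w, Ball Sg k w -> A (x · w)).
  { intros w Hw0. apply NNPP. intro H. apply nBx. apply (crossing Sg S1 Ssym A r HbA k w x); auto. }
  assert (far : forall w, Ball Sg k w -> ~ Ball Sg r (x · w)).
  { intros w Hw0 H. apply nBx. replace x with ((x · w) · ginv w) by apply mulKl'.
    apply Ball_mul; auto. apply Ball_inv; auto. }
  assert (rk : forall w, Ball Sg r w -> Ball Sg k w).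
  { intros w Hw0. apply (Ball_le Sg r); auto. unfold k; lia. }
  destruct (Hsf x) as [Sx|Fx].
  - apply (final_H Sg K bS S1 Ssym HK KS Gcov A (conj cA' (conj uA2 (conj uA2' Hsf))) r r2 HbA HbA' x Sx).
    intros w Hw0. split; [apply deep|apply far]; auto.
  - assert (Fu : Flip A u).
    { destruct Hu as [H|H]; auto. exfalso. eapply (Stab_Flip_excl A x); eauto. }
    apply (final_H Sg K bS S1 Ssym HK KS Gcov A (conj cA' (conj uA2 (conj uA2' Hsf))) r r2 HbA HbA' (x · u)).
    apply Flip_Flip; auto.
    intros w Hw0. rewrite <- mulA. assert (Bu : Ball Sg k (u · w)) by (apply Ball_mul; auto).
    split; [apply deep|apply far]; auto.
Qed.

End Main.

Theorem theorem9p13 (G : Group) (bdd : (G -> Prop) -> Prop) :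
  is_large_scale_group G bdd ->
  bounded_geometry G bdd ->
  ~ locally_bounded G bdd ->
  sigma_bounded G bdd ->
  has_exactly_two_ends G bdd ->
  exists H : G -> Prop, subgroup G H /\ infinite_cyclic G H /\ bounded_index G bdd H.
Proof.
  intros HLS HBG nLB _ H2E. eapply main_glue; eauto.
Qed.
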